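(* Let $X$ be a non-empty set, let $a\notin X$, and let $G$ be the free group on $X\cup\{a\}$. For each $y\in X$ let $\psi_y$ be the endomorphism of $G$ with $\psi_y(y)=a$, $\psi_y(a)=1$ and $\psi_y(x)=1$ for $x\in X\setminus\{y\}$, and define $g\circ_y h=g\cdot\psi_y(g)\cdot h\cdot\psi_y(g)^{-1}$. Then $(\circ_y:y\in X)$ is a brace block on $G$ and the operations $\circ_y$, $y\in X$, are pairwise distinct: $x\circ_y x=x\cdot x$ for $x\in X\setminus\{y\}$, while $y\circ_y y=y\cdot a\cdot y\cdot a^{-1}\ne y\cdot y$.
   Context: A skew brace is a triple $(G,\cdot,\circ)$ where $(G,\cdot)$ and $(G,\circ)$ are groups and $g\circ(h\cdot k)=(g\circ h)\cdot g^{-1}\cdot(g\circ k)$ for all $g,h,k$. A bi-skew brace is a triple $(G,\cdot,\circ)$ such that both $(G,\cdot,\circ)$ and $(G,\circ,\cdot)$ are skew braces. A brace block on a set $G$ is a family of group operations on $G$ any two of which form a bi-skew brace. *)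

(* Defs.v *)
From Stdlib Require Import Utf8.

Definition group_laws {T : Type} (mul : T -> T -> T) (e : T) (inv : T -> T) : Prop :=
  (forall x y z, mul x (mul y z) = mul (mul x y) z) /\
  (forall x, mul e x = x /\ mul x e = x) /\
  (forall x, mul (inv x) x = e /\ mul x (inv x) = e).

Definition is_group_op {T : Type} (op : T -> T -> T) : Prop :=
  exists e inv, group_laws op e inv.

Definition skew_brace {T : Type} (dot circ : T -> T -> T) : Prop :=
  is_group_op circ /\
  exists e inv, group_laws dot e inv /\
    forall g h k, circ g (dot h k) = dot (dot (circ g h) (inv g)) (circ g k).

Definition bi_skew_brace {T : Type} (dot circ : T -> T -> T) : Prop :=
  skew_brace dot circ /\ skew_brace circ dot.

Definition brace_block {T I : Type} (ops : I -> T -> T -> T) : Prop :=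
  (forall i, is_group_op (ops i)) /\
  (forall i j, bi_skew_brace (ops i) (ops j)).

Definition is_hom {G H : Type} (mulG : G -> G -> G) (mulH : H -> H -> H)
  (phi : G -> H) : Prop :=
  forall g h, phi (mulG g h) = mulH (phi g) (phi h).

Definition is_free_on {G S : Type} (mul : G -> G -> G) (e : G) (inv : G -> G)
  (gen : S -> G) : Prop :=
  forall (H : Type) (mulH : H -> H -> H) (eH : H) (invH : H -> H),
    group_laws mulH eH invH ->
    forall f : S -> H,
      (exists phi : G -> H, is_hom mul mulH phi /\ forall s, phi (gen s) = f s) /\
      (forall phi1 phi2 : G -> H,
          is_hom mul mulH phi1 -> (forall s, phi1 (gen s) = f s) ->
          is_hom mul mulH phi2 -> (forall s, phi2 (gen s) = f s) ->
          forall g, phi1 g = phi2 g).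

(* Main.v *)
Require Import Defs.
From Stdlib Require Import ZArith Lia Classical.

Lemma gA {T} {mul : T -> T -> T} {e inv} (H : group_laws mul e inv) x y z :
  mul (mul x y) z = mul x (mul y z).
Proof. destruct H as [A _]. now rewrite A. Qed.
Lemma g1l {T} {mul : T -> T -> T} {e inv} (H : group_laws mul e inv) x : mul e x = x.
Proof. destruct H as [_ [I _]]. apply I. Qed.
Lemma g1r {T} {mul : T -> T -> T} {e inv} (H : group_laws mul e inv) x : mul x e = x.
Proof. destruct H as [_ [I _]]. apply I. Qed.
Lemma gVl {T} {mul : T -> T -> T} {e inv} (H : group_laws mul e inv) x : mul (inv x) x = e.
Proof. destruct H as [_ [_ I]]. apply I. Qed.
Lemma gVr {T} {mul : T -> T -> T} {e inv} (H : group_laws mul e inv) x : mul x (inv x) = e.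
Proof. destruct H as [_ [_ I]]. apply I. Qed.
Lemma gKl {T} {mul : T -> T -> T} {e inv} (H : group_laws mul e inv) x y : mul (inv x) (mul x y) = y.
Proof. now rewrite <- (gA H), (gVl H), (g1l H). Qed.
Lemma gKr {T} {mul : T -> T -> T} {e inv} (H : group_laws mul e inv) x y : mul x (mul (inv x) y) = y.
Proof. now rewrite <- (gA H), (gVr H), (g1l H). Qed.
Lemma gcancl {T} {mul : T -> T -> T} {e inv} (H : group_laws mul e inv) x y z : mul x y = mul x z -> y = z.
Proof. intro E. rewrite <- (gKl H x y), E. apply (gKl H). Qed.
Lemma ginv_uniq {T} {mul : T -> T -> T} {e inv} (H : group_laws mul e inv) x y : mul x y = e -> inv x = y.
Proof. intro E. apply (gcancl H x). now rewrite E, (gVr H). Qed.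
Lemma gVV {T} {mul : T -> T -> T} {e inv} (H : group_laws mul e inv) x : inv (inv x) = x.
Proof. apply (ginv_uniq H), (gVl H). Qed.
Lemma gVe {T} {mul : T -> T -> T} {e inv} (H : group_laws mul e inv) : inv e = e.
Proof. apply (ginv_uniq H), (g1l H). Qed.
Lemma gVM {T} {mul : T -> T -> T} {e inv} (H : group_laws mul e inv) x y :
  inv (mul x y) = mul (inv y) (inv x).
Proof. apply (ginv_uniq H). rewrite (gA H), (gKr H). apply (gVr H). Qed.

Ltac gnorm H := repeat (rewrite ?(gA H), ?(g1l H), ?(g1r H), ?(gVl H), ?(gVr H),
   ?(gKl H), ?(gKr H), ?(gVV H), ?(gVe H), ?(gVM H)).

Lemma hom_e {T} {mul : T -> T -> T} {e inv} (H : group_laws mul e inv) f :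
  is_hom mul mul f -> f e = e.
Proof. intro Hf. apply (gcancl H (f e)). now rewrite <- Hf, !(g1r H). Qed.
Lemma hom_V {T} {mul : T -> T -> T} {e inv} (H : group_laws mul e inv) f :
  is_hom mul mul f -> forall x, f (inv x) = inv (f x).
Proof. intros Hf x. symmetry. apply (ginv_uniq H). now rewrite <- Hf, (gVr H), (hom_e H). Qed.
Lemma gCsw {T} {mul : T -> T -> T} {e inv} (H : group_laws mul e inv) x y z :
  mul x y = mul y x -> mul x (mul y z) = mul y (mul x z).
Proof. intro E. now rewrite <- !(gA H), E. Qed.
Lemma gCV {T} {mul : T -> T -> T} {e inv} (H : group_laws mul e inv) x y :
  mul x y = mul y x -> mul x (inv y) = mul (inv y) x.
Proof. intro E. apply (gcancl H y). rewrite <- (gA H), <- E, (gA H), (gVr H), (g1r H), (gKr H). reflexivity. Qed.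
Lemma gCVV {T} {mul : T -> T -> T} {e inv} (H : group_laws mul e inv) x y :
  mul x y = mul y x -> mul (inv x) (inv y) = mul (inv y) (inv x).
Proof. intro E. rewrite <- !(gVM H). now rewrite E. Qed.

Definition cop {T} (mul : T -> T -> T) (inv : T -> T) (f : T -> T) g h :=
  mul (mul (mul g (f g)) h) (inv (f g)).

Lemma cop_hom {T} {mul : T -> T -> T} {e inv} (H : group_laws mul e inv) f χ :
  is_hom mul mul f -> (forall g, f (χ g) = e) -> forall g h, f (cop mul inv χ g h) = mul (f g) (f h).
Proof. intros Hf Hz g h. unfold cop. rewrite !Hf, (hom_V H f Hf), Hz. now gnorm H. Qed.

Lemma cop_group {T} {mul : T -> T -> T} {e inv} (H : group_laws mul e inv) f :
  is_hom mul mul f -> (forall g, f (f g) = e) ->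
  group_laws (cop mul inv f) e (fun g => mul (mul (inv (f g)) (inv g)) (f g)).
Proof.
  intros Hf Hff. split; [|split].
  - intros x y z. unfold cop at 3. rewrite (cop_hom H f f Hf Hff). unfold cop. rewrite (gVM H (f x)). now gnorm H.
  - intros x. unfold cop. rewrite (hom_e H f Hf). now gnorm H.
  - intros x. unfold cop. rewrite !Hf, !(hom_V H f Hf), Hff. now gnorm H.
Qed.
Lemma brace_eq {T} {mul : T -> T -> T} {e inv} (H : group_laws mul e inv) f c :
  is_hom mul mul f -> is_hom mul mul c ->
  (forall g, f (f g) = e) -> (forall g, f (c g) = e) ->
  (forall g h, mul (f g) (c h) = mul (c h) (f g)) ->
  (forall g h, mul (f g) (f h) = mul (f h) (f g)) ->
  forall g h k, cop mul inv c g (cop mul inv f h k) =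
   cop mul inv f (cop mul inv f (cop mul inv c g h) (mul (mul (inv (f g)) (inv g)) (f g))) (cop mul inv c g k).
Proof.
  intros Hf Hc Hff Hfc Cfc Cff g h k.
  unfold cop. repeat progress rewrite ?Hf, ?(hom_V H f Hf), ?Hff, ?Hfc, ?(hom_e H f Hf). gnorm H.
  rewrite (gCsw H (f g) (f h)) by apply Cff. rewrite (gKr H).
  rewrite (gCsw H (f h) (c g)) by apply Cfc. rewrite (gKl H).
  rewrite (gCsw H (f g) (inv (f h))) by (apply (gCV H), Cff). rewrite (gVr H), (g1r H).
  rewrite (gCVV H (f h) (c g)) by apply Cfc. reflexivity.
Qed.


Lemma skew_cop {T} {mul : T -> T -> T} {e inv} (H : group_laws mul e inv) f c :
  is_hom mul mul f -> is_hom mul mul c ->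
  (forall g, f (f g) = e) -> (forall g, f (c g) = e) -> (forall g, c (c g) = e) ->
  (forall g h, mul (f g) (c h) = mul (c h) (f g)) ->
  (forall g h, mul (f g) (f h) = mul (f h) (f g)) ->
  skew_brace (cop mul inv f) (cop mul inv c).
Proof.
  intros Hf Hc Hff Hfc Hcc Cfc Cff. split.
  - exists e. eexists. apply (cop_group H c Hc Hcc).
  - exists e. eexists. split. apply (cop_group H f Hf Hff).
    apply (brace_eq H f c); auto.
Qed.

Definition zmul (p q : bool * Z) : bool * Z :=
  (xorb (fst p) (fst q), ((if fst q then -1 else 1) * snd p + snd q)%Z).
Definition zinv (p : bool * Z) : bool * Z := (fst p, (- (if fst p then -1 else 1) * snd p)%Z).
Lemma zgroup : group_laws zmul (false, 0%Z) zinv.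
Proof.
  unfold zmul, zinv. split; [|split].
  - intros [s n] [t m] [u k]; cbn [fst snd]. f_equal.
    + now destruct s, t, u.
    + destruct t, u; cbn [fst snd xorb]; lia.
  - intros [s n]; cbn [fst snd]. split; f_equal; try (destruct s; reflexivity); lia.
  - intros [s n]; simpl. split; f_equal; destruct s; cbn [fst snd xorb]; try reflexivity; lia.
Qed.

Theorem mainTheorem13
  (X : Type) (HX : inhabited X)
  (G : Type) (mul : G -> G -> G) (e : G) (inv : G -> G)
  (Hgrp : group_laws mul e inv)
  (gen : option X -> G)
  (Hfree : is_free_on mul e inv gen)
  (psi : X -> G -> G)
  (Hpsi_hom : forall y, is_hom mul mul (psi y))
  (Hpsi_y : forall y, psi y (gen (Some y)) = gen None)
  (Hpsi_a : forall y, psi y (gen None) = e)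
  (Hpsi_x : forall y x, x <> y -> psi y (gen (Some x)) = e) :
  let circ := fun (y : X) (g h : G) =>
                mul (mul (mul g (psi y g)) h) (inv (psi y g)) in
  brace_block circ /\
  (forall y z : X, y <> z -> circ y <> circ z) /\
  (forall y x : X, x <> y ->
     circ y (gen (Some x)) (gen (Some x)) = mul (gen (Some x)) (gen (Some x))) /\
  (forall y : X,
     circ y (gen (Some y)) (gen (Some y))
       = mul (mul (mul (gen (Some y)) (gen None)) (gen (Some y))) (inv (gen None)) /\
     circ y (gen (Some y)) (gen (Some y)) <> mul (gen (Some y)) (gen (Some y))).
Proof.
  intro circ.
  set (a := gen None).
  assert (uniq : forall phi1 phi2, is_hom mul mul phi1 -> is_hom mul mul phi2 ->
            (forall s, phi1 (gen s) = phi2 (gen s)) -> forall g, phi1 g = phi2 g).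
  { intros p1 p2 H1 H2 Hs g.
    apply (proj2 (Hfree G mul e inv Hgrp (fun s => p2 (gen s))) p1 p2 H1 Hs H2 (fun _ => eq_refl)). }
  assert (pgen : forall y s, psi y (gen s) = a \/ psi y (gen s) = e).
  { intros y [x|]. destruct (classic (x = y)) as [->|Hn]. left; apply Hpsi_y.
    right; now apply Hpsi_x. right; apply Hpsi_a. }
  assert (PP : forall z y g, psi z (psi y g) = e).
  { intros z y. apply (uniq (fun g => psi z (psi y g)) (fun _ => e)).
    - intros g h. now rewrite !Hpsi_hom.
    - intros g h. now rewrite (g1l Hgrp).
    - intros s. destruct (pgen y s) as [-> | ->]. apply Hpsi_a. apply (hom_e Hgrp _ (Hpsi_hom z)). }
  assert (CG : forall c, mul c a = mul a c -> forall z h, mul (psi z h) c = mul c (psi z h)).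
  { intros c Hca z h.
    assert (E : psi z h = mul (mul c (psi z h)) (inv c)).
    { revert h. apply uniq. apply Hpsi_hom.
      - intros g h. rewrite Hpsi_hom. now gnorm Hgrp.
      - intros s. destruct (pgen z s) as [-> | ->].
        + rewrite Hca, (gA Hgrp), (gVr Hgrp), (g1r Hgrp). reflexivity.
        + rewrite (g1r Hgrp), (gVr Hgrp). reflexivity. }
    rewrite E at 1. now gnorm Hgrp. }
  assert (CA : forall z h, mul (psi z h) a = mul a (psi z h)) by (apply CG; reflexivity).
  assert (CC : forall y z g h, mul (psi y g) (psi z h) = mul (psi z h) (psi y g)).
  { intros. symmetry. apply CG. apply CA. }
  assert (NC : forall y, mul a (gen (Some y)) <> mul (gen (Some y)) a).
  { intros y E.
    destruct (proj1 (Hfree _ zmul (false,0%Z) zinv zgroup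
       (fun s => match s with None => (true, 0%Z) | Some _ => (false, 1%Z) end))) as [phi [Hphi Hg]].
    apply (f_equal phi) in E. rewrite !Hphi in E. unfold a in E. rewrite !Hg in E.
    unfold zmul in E; simpl in E. inversion E. }
  assert (C4 : forall y, circ y (gen (Some y)) (gen (Some y)) = mul (mul (mul (gen (Some y)) a) (gen (Some y))) (inv a)).
  { intros y. unfold circ. now rewrite Hpsi_y. }
  assert (C3 : forall y x, x <> y -> circ y (gen (Some x)) (gen (Some x)) = mul (gen (Some x)) (gen (Some x))).
  { intros y x Hxy. unfold circ. rewrite Hpsi_x by exact Hxy. now gnorm Hgrp. }
  assert (N4 : forall y, circ y (gen (Some y)) (gen (Some y)) <> mul (gen (Some y)) (gen (Some y))).
  { intros y E. rewrite C4 in E. apply (NC y).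
    assert (E2 : mul (mul a (gen (Some y))) (inv a) = gen (Some y)).
    { apply (gcancl Hgrp (gen (Some y))). rewrite <- E. now gnorm Hgrp. }
    rewrite <- E2 at 2. now gnorm Hgrp. }
  split; [|split; [|split]].
  - split.
    + intro i. exists e. eexists. apply (cop_group Hgrp (psi i) (Hpsi_hom i) (PP i i)).
    + intros i j. split; apply (skew_cop Hgrp); auto.
  - intros y z Hyz E. apply (N4 y). rewrite E. apply C3. auto.
  - exact C3.
  - intro y. split. apply C4. apply N4.
Qed.
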